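(* For every positive integer $n$, the open $\frac{\pi}{2}$-thickening $B_{\frac{\pi}{2}}(\mathbb{S}^n,\mathbf{E}(\mathbb{S}^n))=\{f\in\mathbf{E}(\mathbb{S}^n):\exists x\in\mathbb{S}^n,\ \|f-d_{\mathbb{S}^n}(x,\cdot)\|_\infty<\frac{\pi}{2}\}$ is contractible.
   Context: $\mathbb{S}^n$ is the unit $n$-sphere with its geodesic metric $d_{\mathbb{S}^n}$. For a metric space $X$, $\Delta(X)=\{f:X\to\mathbb{R}\text{ bounded}:f(x)+f(x')\ge d_X(x,x')\}$ and the tight span $\mathbf{E}(X)$ is the set of pointwise-minimal elements of $\Delta(X)$ with the sup-norm metric; $\mathbb{S}^n$ is regarded as a subspace via $x\mapsto d_{\mathbb{S}^n}(x,\cdot)$. *)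

(* Defs.v *)
From HB Require Import structures.
From mathcomp Require Import all_boot all_order all_algebra.
From mathcomp Require Import all_classical all_reals all_analysis.
Unset Printing Implicit Defensive.
Import Order.TTheory GRing.Theory Num.Theory.
Local Open Scope ring_scope.
Local Open Scope classical_set_scope.

Definition dotr {R : realType} {m : nat} (x y : 'rV[R]_m) : R :=
  \sum_(i < m) x ord0 i * y ord0 i.

Definition sphere (R : realType) (n : nat) : Type :=
  {x : 'rV[R]_(n.+1) | dotr x x = 1}.

Definition dS {R : realType} {n : nat} (x y : sphere R n) : R :=
  acos (dotr (sval x) (sval y)).

Definition kur {R : realType} {n : nat} (x : sphere R n) : sphere R n -> R :=
  fun y => dS x y.

Definition boundedf {R : realType} {T : Type} (f : T -> R) : Prop :=
  exists M : R, forall x, `|f x| <= M.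

Definition supdist {R : realType} {T : Type} (f g : T -> R) : R :=
  sup (range (fun x => `|f x - g x|)).

Definition Delta {R : realType} {T : Type} (d : T -> T -> R) : set (T -> R) :=
  [set f | boundedf f /\ forall x x', d x x' <= f x + f x'].

Definition tight_span {R : realType} {T : Type} (d : T -> T -> R) : set (T -> R) :=
  [set f | Delta d f /\
     forall g, Delta d g -> (forall x, g x <= f x) -> g = f].

Definition thickening (R : realType) (n : nat) : set (sphere R n -> R) :=
  [set f | tight_span (@dS R n) f /\
     exists x : sphere R n, supdist f (kur x) < pi / 2].

(* A subset A of a metric space (T, d) is contractible: the identity of A is
   homotopic (through maps A -> A, continuously in the product topology of
   [0,1] x A) to a constant map. *)
Definition contractible {R : realType} {T : Type} (d : T -> T -> R) (A : set T) : Prop :=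
  exists2 a0, A a0 &
  exists H : R -> T -> T,
    [/\ forall t a, 0 <= t <= 1 -> A a -> A (H t a),
        forall a, A a -> H 0 a = a,
        forall a, A a -> H 1 a = a0 &
        forall t a, 0 <= t <= 1 -> A a ->
          forall e : R, 0 < e -> exists2 del : R, 0 < del &
            forall s b, 0 <= s <= 1 -> A b -> `|s - t| < del -> d a b < del ->
              d (H t a) (H s b) < e].

(* Main.v *)
Require Import Defs.
From HB Require Import structures.
From mathcomp Require Import all_boot all_order all_algebra.
From mathcomp Require Import all_classical all_reals all_analysis.
From mathcomp Require Import ring lra.
Import Order.TTheory GRing.Theory Num.Theory.
Local Open Scope ring_scope.

Section Basic.
Context {R : realType}.

Lemma acos_le (X D : R) : -1 <= X <= 1 -> 0 <= D <= pi -> cos D <= X -> acos X <= D.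
Proof.
move=> HX HD Hc; rewrite leNgt; apply/negP => H.
have [/andP[a0 api] ca] := acos_def HX.
have : cos (acos X) < cos D.
  by rewrite ltr_cos // in_itv /= ?a0 ?api ?HD.
by rewrite ca => /(le_lt_trans Hc); rewrite ltxx.
Qed.

Context {k : nat}.
Implicit Types x y z : 'rV[R]_k.

Lemma dotrC x y : dotr x y = dotr y x.
Proof. by apply: eq_bigr => i _; rewrite mulrC. Qed.

Lemma dotrDl x y z : dotr (x + y) z = dotr x z + dotr y z.
Proof. by rewrite /dotr -big_split; apply: eq_bigr => i _; rewrite !mxE mulrDl. Qed.

Lemma dotrZl (a : R) x y : dotr (a *: x) y = a * dotr x y.
Proof. by rewrite /dotr mulr_sumr; apply: eq_bigr => i _; rewrite !mxE mulrA. Qed.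

Lemma dotrNl x y : dotr (- x) y = - dotr x y.
Proof. by rewrite -scaleN1r dotrZl mulN1r. Qed.

Lemma dotrBl x y z : dotr (x - y) z = dotr x z - dotr y z.
Proof. by rewrite dotrDl dotrNl. Qed.

Lemma dotrBr x y z : dotr x (y - z) = dotr x y - dotr x z.
Proof. by rewrite dotrC dotrBl !(dotrC x). Qed.
Lemma dotrDr x y z : dotr x (y + z) = dotr x y + dotr x z.
Proof. by rewrite dotrC dotrDl !(dotrC x). Qed.
Lemma dotrZr (a : R) x y : dotr x (a *: y) = a * dotr x y.
Proof. by rewrite dotrC dotrZl dotrC. Qed.

Lemma dotr_ge0 x : 0 <= dotr x x.
Proof. by apply: sumr_ge0 => i _; rewrite -expr2 sqr_ge0. Qed.

Lemma dotr_eq0 x : dotr x x = 0 -> forall i, x ord0 i = 0.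
Proof.
move=> H i; have : \sum_(j < k) x ord0 j * x ord0 j == 0 by apply/eqP.
rewrite psumr_eq0; last by move=> j _; rewrite -expr2 sqr_ge0.
by move/allP => /(_ i (mem_index_enum _)); rewrite -expr2 sqrf_eq0 => /eqP.
Qed.

Lemma dotr_CS x y : dotr x y ^+ 2 <= dotr x x * dotr y y.
Proof.
have [H0|Hp] := eqVneq (dotr y y) 0.
  have : dotr x y = 0.
    by rewrite /dotr big1 // => i _; rewrite (dotr_eq0 _ H0) mulr0.
  by move=> ->; rewrite expr0n /= mulr_ge0 // dotr_ge0.
have yp : 0 < dotr y y by rewrite lt_def Hp dotr_ge0.
set t := dotr x y / dotr y y.
have := dotr_ge0 (x - t *: y).
rewrite !dotrBl !dotrBr !dotrZl !dotrZr (dotrC y x).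
rewrite /t => H.
have H2 : 0 <= (dotr x x - dotr x y ^+ 2 / dotr y y).
  move: H; set a := dotr x x; set b := dotr x y; set c := dotr y y.
  have -> : a - b ^+ 2 / c = a - b / c * b - (b / c * b - b / c * (b / c * c)).
    by field; rewrite /c; apply: Hp.
  by [].
rewrite -subr_ge0.
have -> : dotr x x * dotr y y - dotr x y ^+ 2 =
  (dotr x x - dotr x y ^+ 2 / dotr y y) * dotr y y.
  by field; apply: Hp.
by rewrite mulr_ge0 // ltW.
Qed.

Lemma dotr_unit_bound x y : dotr x x = 1 -> dotr y y = 1 -> -1 <= dotr x y <= 1.
Proof.
move=> hx hy.
have h1 := dotr_ge0 (x - y); have h2 := dotr_ge0 (x + y).
rewrite !dotrBl !dotrBr hx hy (dotrC y x) in h1.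
rewrite !dotrDl !dotrDr hx hy (dotrC y x) in h2.
apply/andP; split; lra.
Qed.

Lemma dotr_proj x w z : dotr w w = 1 ->
  dotr (x - dotr x w *: w) (z - dotr w z *: w) = dotr x z - dotr x w * dotr w z.
Proof.
move=> hw; rewrite !dotrBl !dotrBr !dotrZl !dotrZr hw. ring.
Qed.

End Basic.

Section Sph.
Context {R : realType}.
Context {n : nat}.
Implicit Types y z w : sphere R n.

Lemma dotrNr k (x y : 'rV[R]_k) : dotr x (- y) = - dotr x y.
Proof. by rewrite dotrC dotrNl dotrC. Qed.

Definition sneg y : sphere R n.
Proof. exists (- sval y); rewrite dotrNl dotrNr opprK; exact: (svalP y). Defined.

Lemma sval_sneg y : sval (sneg y) = - sval y. Proof. by []. Qed.

Lemma snegK y : sneg (sneg y) = y.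
Proof. by apply: eq_sig_hprop => [x|]; [exact: Prop_irrelevance|rewrite /= opprK]. Qed.

Lemma dot_bound y z : -1 <= dotr (sval y) (sval z) <= 1.
Proof. exact: dotr_unit_bound (svalP y) (svalP z). Qed.

Lemma dS_ge0 y z : 0 <= dS y z.
Proof. exact: acos_ge0 (dot_bound y z). Qed.

Lemma dS_lepi y z : dS y z <= pi.
Proof. exact: acos_lepi (dot_bound y z). Qed.

Lemma dS_sym y z : dS y z = dS z y.
Proof. by rewrite /dS dotrC. Qed.

Lemma dS_refl y : dS y y = 0.
Proof. by rewrite /dS (svalP y) acos1. Qed.

Lemma dS_negr y z : dS y (sneg z) = pi - dS y z.
Proof. by rewrite /dS sval_sneg dotrNr acosN // dot_bound. Qed.

Lemma dS_negl y z : dS (sneg y) z = pi - dS y z.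
Proof. by rewrite dS_sym dS_negr dS_sym. Qed.

Lemma dS_antip y : dS y (sneg y) = pi.
Proof. by rewrite dS_negr dS_refl subr0. Qed.

Lemma cos_dS y z : cos (dS y z) = dotr (sval y) (sval z).
Proof. by rewrite /dS acosK // in_itv /= dot_bound. Qed.

Lemma sin_dS y z : sin (dS y z) = Num.sqrt (1 - dotr (sval y) (sval z) ^+ 2).
Proof. by rewrite /dS sin_acos // dot_bound. Qed.

Lemma dS_triangle y w z : dS y z <= dS y w + dS w z.
Proof.
have [Hge|Hlt] := lerP pi (dS y w + dS w z).
  exact: le_trans (dS_lepi y z) Hge.
apply: acos_le; first exact: dot_bound.
  by rewrite addr_ge0 ?dS_ge0 // ltW.
rewrite cosD !cos_dS !sin_dS.
set u := dotr (sval y) (sval w); set v := dotr (sval w) (sval z).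
have hy := svalP y; have hw := svalP w; have hz := svalP z.
have ac := dotr_proj (sval y) (sval w) (sval z) hw.
have aa := dotr_proj (sval y) (sval w) (sval y) hw.
have cc := dotr_proj (sval z) (sval w) (sval z) hw.
rewrite hy (dotrC (sval w) (sval y)) -/u in aa.
rewrite hz (dotrC (sval z) (sval w)) -/v in cc.
rewrite -/u -/v in ac.
have CS := dotr_CS (sval y - u *: sval w) (sval z - v *: sval w).
rewrite ac aa cc in CS.
have u2 : 0 <= 1 - u ^+ 2.
  have := dotr_ge0 (sval y - u *: sval w). by rewrite aa expr2.
have : `|dotr (sval y) (sval z) - u * v| <= Num.sqrt (1 - u ^+ 2) * Num.sqrt (1 - v ^+ 2).
  by rewrite -sqrtrM // -sqrtr_sqr ler_wsqrtr // !expr2.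
rewrite ler_norml => /andP[H1 _]; lra.
Qed.

End Sph.

Section TS.
Local Open Scope classical_set_scope.
Context {R : realType} {n : nat}.
Implicit Types y z w : sphere R n.
Implicit Types f g : sphere R n -> R.

Definition Good f := (forall y z, f y - f z <= dS y z) /\ (forall y, f y + f (sneg y) = pi).

Lemma good_bound {f} : Good f -> forall y, 0 <= f y <= pi.
Proof.
move=> [L A] y.
have h1 := L y (sneg y); have h2 := L (sneg y) y.
rewrite dS_antip in h1; rewrite dS_sym dS_antip in h2.
have h3 := A y. apply/andP; split; lra.
Qed.

Lemma good_delta {f} : Good f -> Delta dS f.
Proof.
move=> G; have B := good_bound G; case: G => [L A]; split.
  exists pi => y; have /andP[h1 h2] := B y; by rewrite ger0_norm.
move=> x x'; have := L (sneg x') x; rewrite dS_negl.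
have := A x'; rewrite (dS_sym x x'); lra.
Qed.

Lemma good_tight {f} : Good f -> tight_span dS f.
Proof.
move=> G; split; first exact: good_delta.
move=> g [_ Dg] gf; apply/funext => y; apply/eqP; rewrite eq_le gf /=.
have := Dg y (sneg y); rewrite dS_antip.
have := gf (sneg y); have := G.2 y; lra.
Qed.

Lemma tight_good {f} : tight_span dS f -> Good f.
Proof.
move=> [[[M bf] Hd] Hmin].
have f0 : forall y, 0 <= f y.
  by move=> y; have := Hd y y; rewrite dS_refl; lra.
have lower : forall y v, 0 <= v -> v <= f y ->
    (forall z, z <> y -> dS y z <= v + f z) -> v = f y.
  move=> y v v0 vf Hz.
  pose g z := if pselect (z = y) then v else f z.
  have gy : g y = v by rewrite /g; case: pselect.
  have gz : forall z, z <> y -> g z = f z by move=> z zy; rewrite /g; case: pselect.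
  have Dg : Delta dS g.
    split.
      exists M => z; rewrite /g; destruct (pselect (z = y)); last exact: bf.
      by rewrite ger0_norm //; apply: le_trans vf _; apply: le_trans (bf y); exact: ler_norm.
    move=> x x'.
    have [->|xy] := pselect (x = y); have [->|x'y] := pselect (x' = y).
    - by rewrite gy dS_refl; lra.
    - by rewrite gy (gz _ x'y); exact: Hz.
    - by rewrite gy (gz _ xy) dS_sym addrC; apply: Hz.
    - by rewrite (gz _ xy) (gz _ x'y); exact: Hd.
  have := Hmin g Dg.
  have gf : forall z, g z <= f z.
    move=> z; have [->|zy] := pselect (z = y); first by rewrite gy.
    by rewrite (gz _ zy).
  by move=> /(_ gf) => e; rewrite -gy e.
have Lip : forall y w, f y - f w <= dS y w.
  move=> y w; rewrite leNgt; apply/negP => H.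
  have := lower y (f w + dS y w).
  have H1 : 0 <= f w + dS y w by rewrite addr_ge0 ?f0 ?dS_ge0.
  have H2 : f w + dS y w <= f y by lra.
  move=> /(_ H1 H2) e.
  have : f w + dS y w = f y.
    apply: e => z _; have := dS_triangle y w z; have := Hd w z; lra.
  lra.
have key : forall y, f y = Num.max 0 (pi - f (sneg y)).
  move=> y; symmetry; apply: lower.
  - by rewrite le_max lexx.
  - rewrite ge_max f0 /=; have := Hd y (sneg y); rewrite dS_antip; lra.
  - move=> z _; have := Lip (sneg y) z; rewrite dS_negl.
    have : pi - f (sneg y) <= Num.max 0 (pi - f (sneg y)) by rewrite le_max lexx orbT.
    lra.
split => // y; have := key y; have := key (sneg y); rewrite snegK.
have := Hd y (sneg y); rewrite dS_antip.
have := f0 y; have := f0 (sneg y).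
case: (lerP 0 (pi - f (sneg y))) => h1.
  by move=> _ _ _ _ ->; lra.
move=> _ _ _ e1 e2; rewrite e2 subr0 max_r ?pi_ge0 // in e1; lra.
Qed.

End TS.

Section SD.
Local Open Scope classical_set_scope.
Context {R : realType} {n : nat}.
Implicit Types y z w : sphere R n.
Implicit Types f g : sphere R n -> R.

Definition e0 : 'rV[R]_n.+1 := \row_i (i == ord0)%:R.

Lemma e0_unit : dotr e0 e0 = 1.
Proof.
rewrite /dotr big_ord_recl big1 ?addr0; first by rewrite !mxE eqxx mulr1.
by move=> i _; rewrite !mxE /= mul0r.
Qed.

Definition pt0 : sphere R n := exist _ e0 e0_unit.

Lemma supdist_le f g M : (forall y, `|f y - g y| <= M) -> supdist f g <= M.
Proof.
move=> H; apply: ge_sup.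
  by exists `|f pt0 - g pt0|; exists pt0.
by move=> _ [y _ <-]; exact: H.
Qed.

Lemma supdist_ge {f g} y : boundedf f -> boundedf g -> `|f y - g y| <= supdist f g.
Proof.
move=> [Mf bf] [Mg bg]; apply: ub_le_sup; last by exists y.
exists (Mf + Mg) => _ [z _ <-].
by apply: le_trans (ler_normB _ _) _; apply: lerD.
Qed.

Lemma kur_bounded x : boundedf (@kur R n x).
Proof. by exists pi => y; rewrite /kur ger0_norm ?dS_ge0 ?dS_lepi. Qed.

Lemma good_bounded {f} : Good f -> boundedf f.
Proof. by move=> G; exists pi => y; have /andP[h1 h2] := good_bound G y; rewrite ger0_norm. Qed.

Lemma thick_iff f : thickening R n f <-> Good f /\ exists x, f x < pi / 2.
Proof.
split.
  move=> [T [x Hx]]; have G := tight_good T; split => //; exists x.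
  have := supdist_ge x (good_bounded G) (kur_bounded x).
  rewrite /kur dS_refl subr0 ger0_norm; last by have /andP[] := good_bound G x.
  by move=> h; apply: le_lt_trans h Hx.
move=> [G [x Hx]]; split; first exact: good_tight.
exists x; apply: le_lt_trans Hx; apply: supdist_le => y.
rewrite /kur ler_norml; have := G.1 y x; rewrite (dS_sym y x).
have := (good_delta G).2 x y; lra.
Qed.

End SD.

Section Reals.
Context {R : realType}.

Lemma bern (t : R) j : 0 <= t -> 1 + j%:R * t <= (1 + t) ^+ j.
Proof.
move=> t0; elim: j => [|j IH]; first by rewrite mul0r addr0 expr0.
rewrite exprS -natr1.
have h : 0 <= (1 + t) by lra.
have h2 : 0 <= j%:R * t * t by rewrite mulr_ge0 // mulr_ge0.
apply: le_trans (ler_wpM2l h IH).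
have -> : (1 + t) * (1 + j%:R * t) = 1 + (j%:R + 1) * t + j%:R * t * t by ring.
lra.
Qed.

Lemma geo0 (q M v : R) : 0 <= q < 1 -> (forall j, `|v| <= M * q ^+ j) -> v = 0.
Proof.
move=> /andP[q0 q1] H; apply/eqP; apply: contraT => vn.
have vp : 0 < `|v| by rewrite normr_gt0.
have M0 : `|v| <= M by have := H 0%N; rewrite expr0 mulr1.
have [qz|qp] := eqVneq q 0.
  by have := H 1%N; rewrite qz expr1 mulr0 => h; move: vp; rewrite ltNge h.
have qpos : 0 < q by rewrite lt_def qp q0.
set t := q^-1 - 1.
have tp : 0 < t by rewrite /t subr_gt0 invf_gt1.
have Mv : 0 <= M / (`|v| * t).
  by apply: divr_ge0; [exact: le_trans (ltW vp) M0|apply: mulr_ge0; apply: ltW].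
have := archi_boundP Mv; set j := Num.Def.archi_bound _ => hj.
have := H j; have := @bern t j (ltW tp).
have -> : 1 + t = q^-1 by rewrite /t; ring.
rewrite exprVn => hb hv.
have hq : 0 < q ^+ j by rewrite exprn_gt0.
have : `|v| * (1 + j%:R * t) <= M.
  have := ler_wpM2l (ltW vp) hb.
  move=> h; apply: le_trans h _.
  by rewrite ler_pdivrMr.
move: hj; rewrite ltr_pdivrMr ?mulr_gt0 // => hj.
nra.
Qed.

Lemma cos2x (x : R) : cos (x + x) = 2 * cos x ^+ 2 - 1.
Proof. rewrite cosD -!expr2 sin2cos2; ring. Qed.

Lemma acos_lip8 (X C : R) : -1 <= X <= 1 -> -1 <= C <= 1 ->
  1 - X <= 9 * (1 - C) -> acos X <= 8 * acos C.
Proof.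
move=> hX hC H.
have [/andP[D0 Dpi] cD] := acos_def hC.
set D := acos C in D0 Dpi cD *.
have [Hge|Hlt] := lerP pi (8 * D).
  exact: le_trans (acos_lepi hX) Hge.
apply: acos_le => //; first by apply/andP; split; lra.
have pi0 := pi_gt0 R.
have c2p : 0 < cos (4 * D).
  by apply: cos_gt0_pihalf; apply/andP; split; lra.
have c1p : 0 < cos (2 * D).
  by apply: cos_gt0_pihalf; apply/andP; split; lra.
have cp : 0 < cos D.
  by apply: cos_gt0_pihalf; apply/andP; split; lra.
have e1 : cos (2 * D) = 2 * C ^+ 2 - 1.
  by rewrite -cD -cos2x; congr cos; ring.
have e2 : cos (4 * D) = 2 * cos (2 * D) ^+ 2 - 1.
  by rewrite -cos2x; congr cos; ring.
have e3 : cos (8 * D) = 2 * cos (4 * D) ^+ 2 - 1.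
  by rewrite -cos2x; congr cos; ring.
rewrite e3; rewrite e2 in c2p *; rewrite e1 in c1p c2p *.
rewrite cD in cp.
have C1 : C <= 1 by case/andP: hC.
have Ch : 1/2 <= C by nra.
set c1 := 2 * C ^+ 2 - 1 in c1p c2p *.
have c1h : 1/2 <= c1 by nra.
have c1le : c1 <= 1 by rewrite /c1; nra.
set c2 := 2 * c1 ^+ 2 - 1 in c2p *.
have c2le : c2 <= 1 by rewrite /c2; nra.
have E1 : 1 - c1 >= 3 * (1 - C) by rewrite /c1; nra.
have E2 : 1 - c2 >= 3 * (1 - c1) by rewrite /c2; nra.
have E3 : 1 - (2 * c2 ^+ 2 - 1) >= 2 * (1 - c2) by nra.
lra.
Qed.

End Reals.

Section PhiS.
Context {R : realType} {m : nat}.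
Local Notation V := 'rV[R]_(m.+2).
Implicit Types x y : V.

Definition i0 : 'I_(m.+2) := ord0.
Definition i1 : 'I_(m.+2) := lift ord0 ord0.
Definition rv x : 'rV[R]_m := \row_j x ord0 (lift ord0 (lift ord0 j)).
Definition ca x : R := x ord0 i0.
Definition cb x : R := x ord0 i1.

Lemma i10 : (i1 == i0) = false.
Proof. by apply/negbTE; rewrite eq_sym neq_lift. Qed.
Lemma ir0 j : (lift ord0 (lift ord0 j) == i0 :> 'I_(m.+2)) = false.
Proof. by apply/negbTE; rewrite eq_sym neq_lift. Qed.
Lemma ir1 j : (lift ord0 (lift ord0 j) == i1 :> 'I_(m.+2)) = false.
Proof. by apply/negbTE; rewrite /i1 (inj_eq lift_inj) eq_sym neq_lift. Qed.

Lemma dotr_split x y : dotr x y = ca x * ca y + cb x * cb y + dotr (rv x) (rv y).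
Proof.
rewrite /dotr big_ord_recl big_ord_recl addrA; congr (_ + _ + _).
by apply: eq_bigr => j _; rewrite !mxE.
Qed.

Definition phA x := (ca x ^+ 3 - 3 * ca x * cb x ^+ 2) / (ca x ^+ 2 + cb x ^+ 2).
Definition phB x := (3 * ca x ^+ 2 * cb x - cb x ^+ 3) / (ca x ^+ 2 + cb x ^+ 2).

Definition Phiv x : V :=
  \row_i (if i == i0 then phA x else if i == i1 then phB x else x ord0 i).

Lemma Phiv_a x : ca (Phiv x) = phA x. Proof. by rewrite /ca mxE eqxx. Qed.
Lemma Phiv_b x : cb (Phiv x) = phB x. Proof. by rewrite /cb mxE i10 eqxx. Qed.
Lemma Phiv_r x : rv (Phiv x) = rv x.
Proof. by apply/matrixP => i j; rewrite !mxE ir0 ir1. Qed.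

Lemma phi_dot x y : phA x * phA y + phB x * phB y =
  let P := ca x * ca y + cb x * cb y in let Q := ca x * cb y - cb x * ca y in
  (P ^+ 3 - 3 * P * Q ^+ 2) / (P ^+ 2 + Q ^+ 2).
Proof.
rewrite /phA /phB /= !mulf_div -mulrDl.
have -> : (ca x * ca y + cb x * cb y) ^+ 2 + (ca x * cb y - cb x * ca y) ^+ 2 =
  (ca x ^+ 2 + cb x ^+ 2) * (ca y ^+ 2 + cb y ^+ 2) by ring.
congr (_ / _); ring.
Qed.

Lemma cube_sq (P : R) : P ^+ 3 / P ^+ 2 = P.
Proof. have [->|h] := eqVneq P 0; first by rewrite expr0n mul0r. by field. Qed.

Lemma Phiv_unit x : dotr (Phiv x) (Phiv x) = dotr x x.
Proof.
rewrite !dotr_split !Phiv_a !Phiv_b !Phiv_r phi_dot /=.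
have -> : ca x * cb x - cb x * ca x = 0 by ring.
by rewrite expr0n /= mulr0 subr0 addr0 cube_sq.
Qed.

Lemma rest_sq x : dotr x x = 1 -> dotr (rv x) (rv x) = 1 - (ca x ^+ 2 + cb x ^+ 2).
Proof. by move=> h; rewrite -h dotr_split; ring. Qed.

Lemma Phiv_ineq x y : dotr x x = 1 -> dotr y y = 1 ->
  1 - dotr (Phiv x) (Phiv y) <= 9 * (1 - dotr x y).
Proof.
move=> hx hy.
rewrite !dotr_split !Phiv_a !Phiv_b !Phiv_r phi_dot /=.
set a := ca x; set b := cb x; set c := ca y; set d := cb y.
set r := dotr (rv x) (rv y).
have rx := rest_sq _ hx; have ry := rest_sq _ hy.
rewrite -/a -/b in rx; rewrite -/c -/d in ry.
have CS := dotr_CS (rv x) (rv y). rewrite rx ry -/r in CS.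
have rx0 := dotr_ge0 (rv x); have ry0 := dotr_ge0 (rv y).
rewrite rx in rx0; rewrite ry in ry0.
set A := a ^+ 2 + b ^+ 2 in rx rx0 CS *.
set B := c ^+ 2 + d ^+ 2 in ry ry0 CS *.
have A0 : 0 <= A by rewrite /A addr_ge0 ?sqr_ge0.
have B0 : 0 <= B by rewrite /B addr_ge0 ?sqr_ge0.
set pA := Num.sqrt A; set pB := Num.sqrt B.
have pA2 : pA ^+ 2 = A by rewrite sqr_sqrtr.
have pB2 : pB ^+ 2 = B by rewrite sqr_sqrtr.
have pA0 : 0 <= pA := sqrtr_ge0 A.
have pB0 : 0 <= pB := sqrtr_ge0 B.
have pA1 : pA <= 1 by nra.
have pB1 : pB <= 1 by nra.
set P := a * c + b * d; set Q := a * d - b * c.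
have PQ : P ^+ 2 + Q ^+ 2 = (pA * pB) ^+ 2 by rewrite exprMn pA2 pB2 /P /Q /A /B; ring.
set rho := pA * pB in PQ.
have rho0 : 0 <= rho by rewrite mulr_ge0.
have urho : rho <= 1 - r.
  rewrite leNgt; apply/negP => H.
  have h1 : 0 <= 1 - rho by rewrite /rho; nra.
  have h2 : (1 - rho) ^+ 2 < r ^+ 2 by nra.
  have h3 : (1 - A) * (1 - B) <= (1 - rho) ^+ 2.
    rewrite -pA2 -pB2 /rho; have := sqr_ge0 (pA - pB); nra.
  lra.
have P2 : P ^+ 2 <= rho ^+ 2 by rewrite -PQ; nra.
have [rz|rp] := eqVneq rho 0.
  rewrite PQ rz expr0n /= invr0 mulr0 add0r.
  have : P = 0 by move: P2; rewrite rz expr0n /=; nra.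
  move=> ->; lra.
have rpos : 0 < rho by rewrite lt_def rp rho0.
set T := (P ^+ 3 - 3 * P * Q ^+ 2) / (P ^+ 2 + Q ^+ 2).
have Teq : T * rho ^+ 2 = 4 * P ^+ 3 - 3 * P * rho ^+ 2.
  rewrite /T PQ; have -> : Q ^+ 2 = rho ^+ 2 - P ^+ 2 by rewrite -PQ; ring.
  by field.
have Pm : - rho <= P by nra.
have Pp : P <= rho by nra.
have key : 0 <= (8 * (1 - r) - 9 * P + T) * rho ^+ 2.
  have -> : (8 * (1 - r) - 9 * P + T) * rho ^+ 2 =
    4 * (2 * ((1 - r) - rho) * rho ^+ 2 + (rho - P) ^+ 2 * (2 * rho + P)).
    by rewrite mulrDl Teq; ring.
  rewrite mulr_ge0 // addr_ge0 // ?mulr_ge0 // ?sqr_ge0 //; lra.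
have : 0 <= 8 * (1 - r) - 9 * P + T.
  by move: key; rewrite pmulr_lge0 // exprn_gt0.
lra.
Qed.

End PhiS.

Section PhiSph.
Context {R : realType} {m : nat}.
Local Notation V := 'rV[R]_(m.+2).
Local Notation S := (sphere R m.+1).
Implicit Types y z : S.
Implicit Types x : V.

Lemma sph_eq y z : sval y = sval z -> y = z.
Proof. by apply: eq_sig_hprop => x p q; exact: Prop_irrelevance. Qed.

Definition Phi (y : S) : S.
Proof. exists (Phiv (sval y)); rewrite Phiv_unit; exact: (svalP y). Defined.

Lemma Phi_lip y z : dS (Phi y) (Phi z) <= 8 * dS y z.
Proof.
apply: acos_lip8; [exact: dot_bound|exact: dot_bound|].
exact: Phiv_ineq (svalP y) (svalP z).
Qed.

Lemma Phi_odd y : Phi (sneg y) = sneg (Phi y).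
Proof.
apply: sph_eq => /=; apply/matrixP => i j; rewrite !mxE.
rewrite /phA /phB /ca /cb !mxE !sqrrN.
have h : forall u v w : R, u = - v -> u / w = - (v / w) by move=> u v w ->; rewrite mulNr.
case: ifP => _; last case: ifP => _ //.
- by apply: h; ring.
- by apply: h; ring.
Qed.

Definition radv x : R := Num.sqrt (ca x ^+ 2 + cb x ^+ 2).

Definition Pv x (t : R) : V :=
  \row_i (if i == i0 then radv x * cos t else if i == i1 then radv x * sin t else x ord0 i).

Lemma Pv_a x t : ca (Pv x t) = radv x * cos t. Proof. by rewrite /ca mxE eqxx. Qed.
Lemma Pv_b x t : cb (Pv x t) = radv x * sin t. Proof. by rewrite /cb mxE i10 eqxx. Qed.
Lemma Pv_r x t : rv (Pv x t) = rv x.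
Proof. by apply/matrixP => i j; rewrite !mxE ir0 ir1. Qed.

Lemma radv2 x : radv x ^+ 2 = ca x ^+ 2 + cb x ^+ 2.
Proof. by rewrite sqr_sqrtr // addr_ge0 ?sqr_ge0. Qed.

Lemma Pv_unit x t : dotr (Pv x t) (Pv x t) = dotr x x.
Proof.
rewrite !dotr_split Pv_a Pv_b Pv_r -[in RHS](radv2 x).
have := cos2Dsin2 t => h.
rewrite -(mulr1 (radv x ^+ 2)) -h; ring.
Qed.

Definition Ps (y : S) (t : R) : S.
Proof. exists (Pv (sval y) t); rewrite Pv_unit; exact: (svalP y). Defined.

Lemma rad_Pv x t : radv (Pv x t) = radv x.
Proof.
rewrite /radv Pv_a Pv_b !exprMn -mulrDr cos2Dsin2 mulr1.
by rewrite sqrtr_sqr ger0_norm // sqrtr_ge0.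
Qed.

Lemma cos3 (t : R) : cos (3 * t) = cos t ^+ 3 - 3 * cos t * sin t ^+ 2.
Proof.
have -> : 3 * t = t + (t + t) by ring.
rewrite cosD cosD sinD; ring.
Qed.

Lemma sin3 (t : R) : sin (3 * t) = 3 * cos t ^+ 2 * sin t - sin t ^+ 3.
Proof.
have -> : 3 * t = t + (t + t) by ring.
rewrite sinD cosD sinD; ring.
Qed.

Lemma Phi_Ps y t : Phi (Ps y t) = Ps y (3 * t).
Proof.
apply: sph_eq => /=; apply/matrixP => i j; rewrite !mxE.
have den : ca (Pv (sval y) t) ^+ 2 + cb (Pv (sval y) t) ^+ 2 = radv (sval y) ^+ 2.
  by rewrite -radv2 rad_Pv.
case: ifP => h0; last case: ifP => h1; last by rewrite h0 h1.
- rewrite /phA den Pv_a Pv_b cos3.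
  have [->|h] := eqVneq (radv (sval y)) 0; first by rewrite expr0n invr0 !mulr0 mul0r.
  by field.
- rewrite /phB den Pv_a Pv_b sin3.
  have [->|h] := eqVneq (radv (sval y)) 0; first by rewrite expr0n invr0 !mulr0 mul0r.
  by field.
Qed.

Lemma polar (a b : R) : exists t, -pi <= t <= pi /\
  a = Num.sqrt (a ^+ 2 + b ^+ 2) * cos t /\ b = Num.sqrt (a ^+ 2 + b ^+ 2) * sin t.
Proof.
set r := Num.sqrt (a ^+ 2 + b ^+ 2).
have r0 : 0 <= r := sqrtr_ge0 _.
have r2 : r ^+ 2 = a ^+ 2 + b ^+ 2 by rewrite sqr_sqrtr // addr_ge0 ?sqr_ge0.
have pi0 := pi_gt0 R.
have [rz|rp] := eqVneq r 0.
  exists 0; rewrite rz !mul0r; split; first by apply/andP; split; lra.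
  have : a ^+ 2 + b ^+ 2 = 0 by rewrite -r2 rz expr0n.
  move=> h; split; nra.
have rpos : 0 < r by rewrite lt_def rp r0.
set c := a / r.
have cb : -1 <= c <= 1.
  have : c ^+ 2 <= 1.
    rewrite /c expr_div_n r2 ler_pdivrMr; last by rewrite -r2 exprn_gt0.
    by rewrite mul1r lerDl sqr_ge0.
  by move=> h; apply/andP; split; nra.
have [/andP[al0 alpi] cal] := acos_def cb.
set al := acos c in al0 alpi cal *.
have s0 : 0 <= sin al by apply: sin_ge0_pi; rewrite al0 alpi.
have rc : r * cos al = a by rewrite cal /c; field.
have rs2 : (r * sin al) ^+ 2 = b ^+ 2.
  rewrite exprMn sin2cos2 cal /c expr_div_n mulrBr mulr1 r2; field.
  by rewrite -r2 expf_neq0.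
have rsb : r * sin al = `|b|.
  by rewrite -sqrtr_sqr -rs2 sqrtr_sqr ger0_norm // mulr_ge0.
have [b0|b0] := lerP 0 b.
  exists al; split; first by apply/andP; split; lra.
  by rewrite rc rsb ger0_norm.
exists (- al); split; first by apply/andP; split; lra.
by rewrite cosN sinN mulrN rc rsb ltr0_norm // opprK.
Qed.

Lemma Ps_polar y : exists t, -pi <= t <= pi /\ Ps y t = y.
Proof.
have [t [ht [ha hb]]] := polar (ca (sval y)) (cb (sval y)).
exists t; split => //; apply: sph_eq => /=; apply/matrixP => i j; rewrite !mxE.
rewrite (ord1 i); case: ifP => [/eqP ->|_]; first by rewrite -/(radv _) in ha; rewrite -ha.
by case: ifP => [/eqP ->|_] //; rewrite -/(radv _) in hb; rewrite -hb.
Qed.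

Lemma dS_Ps y t : -pi <= t <= pi -> dS (Ps y t) (Ps y 0) <= `|t|.
Proof.
move=> ht; apply: acos_le; first exact: dot_bound.
  by rewrite normr_ge0 /=; case: (ler0P t) => h; rewrite ?ler0_norm ?gtr0_norm //; lra.
rewrite /= dotr_split !Pv_a !Pv_b !Pv_r cos0 sin0.
have hy := rest_sq _ (svalP y); rewrite -radv2 in hy; rewrite hy.
have hc : cos `|t| = cos t by case: (ler0P t) => h; rewrite ?ler0_norm ?gtr0_norm ?cosN.
rewrite hc.
have r1 : radv (sval y) ^+ 2 <= 1.
  have := dotr_ge0 (rv (sval y)); rewrite hy; lra.
have := cos_le1 t; have := sqr_ge0 (radv (sval y)); nra.
Qed.

End PhiSph.

Section Eigen.
Context {R : realType} {m : nat}.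
Local Notation S := (sphere R m.+1).
Implicit Types y z : S.

Lemma lip_abs (h : S -> R) a b : (forall y z, h y - h z <= dS y z) -> `|h a - h b| <= dS a b.
Proof. by move=> L; rewrite ler_norml; have := L a b; have := L b a; rewrite dS_sym; lra. Qed.

Lemma eigen0 (h : S -> R) (k B : R) : 0 <= k ->
  (forall y z, h y - h z <= dS y z) -> (forall y, `|h y| <= B) ->
  (forall y, h (Phi y) = - k * h y) -> forall y, h y = 0.
Proof.
move=> k0 L Bd E y.
have [k1|k1] := lerP k 1.
  have [t [ht Pe]] := Ps_polar y.
  have hinf : h (Ps y 0) = 0.
    have := E (Ps y 0); rewrite Phi_Ps mulr0 => e.
    have : (1 + k) * h (Ps y 0) = 0 by rewrite mulrDl mul1r {1}e; ring.
    by move/eqP; rewrite mulf_eq0 => /orP[/eqP h1|/eqP //]; lra.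
  have chain : forall j, h y = (- k) ^+ j * h (Ps y (t / 3 ^+ j)).
    elim => [|j IH]; first by rewrite expr0 divr1 Pe mul1r.
    rewrite IH.
    have -> : t / 3 ^+ j = 3 * (t / 3 ^+ j.+1) by rewrite exprS; field.
    by rewrite -Phi_Ps E (exprSr (- k)); ring.
  have pi0 := pi_gt0 R.
  apply: (@geo0 R (k / 3) pi); first by apply/andP; split; lra.
  move=> j; rewrite (chain j) normrM normrX normrN (ger0_norm k0).
  have h3 : 0 < 3 ^+ j :> R by rewrite exprn_gt0.
  have h31 : 1 <= 3 ^+ j :> R by rewrite exprn_ege1 // ler1n.
  have tj : -pi <= t / 3 ^+ j <= pi.
    apply/andP; split.
      by rewrite ler_pdivlMr //; nra.
    by rewrite ler_pdivrMr //; nra.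
  have := dS_Ps y _ tj; have := lip_abs h (Ps y (t / 3 ^+ j)) (Ps y 0) L.
  rewrite hinf subr0 => hA hB.
  have hC : `|t / 3 ^+ j| <= pi / 3 ^+ j.
    by rewrite normrM normfV (ger0_norm (ltW h3)) ler_pdivrMr // divfK ?gt_eqF //; rewrite ler_norml.
  rewrite expr_div_n mulrA (mulrC pi) -mulrA.
  have kj : 0 <= k ^+ j by rewrite exprn_ge0.
  apply: ler_wpM2l => //.
  by apply: le_trans hA _; apply: le_trans hB _.
have it : forall j, h (iter j Phi y) = (- k) ^+ j * h y.
  elim => [|j IH]; first by rewrite expr0 mul1r.
  by rewrite iterS E IH exprS; ring.
apply: (@geo0 R k^-1 B).
  by apply/andP; split; [rewrite invr_ge0 ltW // (lt_trans ltr01)|rewrite invf_lt1 // (lt_trans ltr01)].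
move=> j; have := Bd (iter j Phi y).
rewrite it normrM normrX normrN (@ger0_norm _ k) ?(ltW (lt_trans ltr01 k1)) //.
have kp : 0 < k ^+ j by rewrite exprn_gt0 // (lt_trans ltr01).
by rewrite exprVn ler_pdivlMr // mulrC.
Qed.

End Eigen.

Section Pts.
Context {R : realType} {m : nat}.
Local Notation S := (sphere R m.+1).
Implicit Types y z : S.

Definition pp : S := Ps pt0 0.
Definition alq : R := pi *+ 2 / 3.
Definition qq : S := Ps pt0 alq.

Lemma rad_pt0 : radv (sval (@pt0 R m.+1)) = 1.
Proof.
rewrite /radv /ca /cb /= /e0 !mxE /= /i1.
by rewrite expr1n expr0n /= addr0 sqrtr1.
Qed.

Lemma Phi_pq : Phi qq = Phi pp.
Proof.
rewrite /qq /pp !Phi_Ps mulr0.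
have -> : 3 * alq = pi *+ 2 by rewrite /alq; field.
apply: sph_eq => /=; apply/matrixP => i j; rewrite !mxE.
rewrite cos2pi cos0.
have := @sinD2pi R 0; rewrite add0r => ->.
by [].
Qed.

Lemma dS_pq : dS pp qq != 0.
Proof.
have pi0 := pi_gt0 R.
have ha : 0 <= alq <= pi by rewrite /alq; apply/andP; split; rewrite -mulr_natr; nra.
rewrite dS_sym /dS /qq /pp /= dotr_split !Pv_a !Pv_b !Pv_r rad_pt0 cos0 sin0.
have -> : dotr (rv (sval (@pt0 R m.+1))) (rv (sval (@pt0 R m.+1))) = 0.
  by rewrite /dotr big1 // => j _; rewrite /= !mxE /=; rewrite mul0r.
rewrite !mul1r mulr0 addr0 mulr1 addr0 cosK ?in_itv //=.
by rewrite /alq gt_eqF // divr_gt0 // pmulrn_rgt0.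
Qed.

End Pts.

Section Hom.
Context {R : realType} {m : nat}.
Local Notation S := (sphere R m.+1).
Implicit Types y z : S.
Implicit Types f g : S -> R.

Definition coefA (t : R) : R := if t <= 1/2 then 1 - 2 * t else 0.
Definition coefC (t : R) : R := if t <= 1/2 then 0 else 2 * t - 1.
Definition coefB (t : R) : R := 1 - coefA t - coefC t.

Definition Tf f : S -> R := fun y => pi / 2 + (f (Phi y) - pi / 2) / 8.
Definition Hom (t : R) f : S -> R :=
  fun y => coefA t * f y + coefB t * Tf f y + coefC t * kur pp y.

Lemma coef_ge0 t : 0 <= t <= 1 -> [/\ 0 <= coefA t, 0 <= coefB t & 0 <= coefC t].
Proof.
move=> /andP[t0 t1]; rewrite /coefB /coefA /coefC.
by case: (lerP t (1/2)) => h; split; lra.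
Qed.

Lemma coef_lip t s : `|coefA t - coefA s| <= 2 * `|t - s| /\ `|coefC t - coefC s| <= 2 * `|t - s|.
Proof.
have h1 := ler_norm (t - s); have h2 := ler_norm (s - t); rewrite distrC in h2.
rewrite /coefA /coefC; split; rewrite ler_norml; case: (lerP t (1/2)) => ?; case: (lerP s (1/2)) => ?; apply/andP; split; lra.
Qed.

Lemma Good_T f : Good f -> Good (Tf f).
Proof.
move=> [L A]; split.
  move=> y z; rewrite /Tf; have := L (Phi y) (Phi z); have := Phi_lip y z; lra.
move=> y; rewrite /Tf Phi_odd; have := A (Phi y); lra.
Qed.

Lemma Good_kur x : Good (@kur R m.+1 x).
Proof.
split; rewrite /kur.
  by move=> y z; have := dS_triangle x z y; rewrite (dS_sym z y); lra.
by move=> y; rewrite dS_negr; lra.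
Qed.

Lemma Good_comb (a b c : R) f g k : 0 <= a -> 0 <= b -> 0 <= c -> a + b + c = 1 ->
  Good f -> Good g -> Good k -> Good (fun y => a * f y + b * g y + c * k y).
Proof.
move=> a0 b0 c0 abc [Lf Af] [Lg Ag] [Lk Ak]; split.
  move=> y z.
  have h1 := ler_wpM2l a0 (Lf y z); have h2 := ler_wpM2l b0 (Lg y z).
  have h3 := ler_wpM2l c0 (Lk y z).
  have e : a * f y + b * g y + c * k y - (a * f z + b * g z + c * k z) =
    a * (f y - f z) + b * (g y - g z) + c * (k y - k z) by ring.
  have e2 : dS y z = a * dS y z + b * dS y z + c * dS y z.
    by rewrite -!mulrDl abc mul1r.
  rewrite e; lra.
move=> y; have e : a * f y + b * g y + c * k y + (a * f (sneg y) + b * g (sneg y) + c * k (sneg y)) =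
  a * (f y + f (sneg y)) + b * (g y + g (sneg y)) + c * (k y + k (sneg y)) by ring.
by rewrite e Af Ag Ak -!mulrDl abc mul1r.
Qed.

Lemma Good_Hom t f : 0 <= t <= 1 -> Good f -> Good (Hom t f).
Proof.
move=> ht G; have [a0 b0 c0] := coef_ge0 _ ht.
apply: Good_comb => //; last exact: Good_kur.
- by rewrite /coefB; ring.
- exact: Good_T.
Qed.

End Hom.

Section Hom2.
Context {R : realType} {m : nat}.
Local Notation S := (sphere R m.+1).
Implicit Types y z : S.
Implicit Types f g : S -> R.

Lemma Hom_nz t f : 0 <= t <= 1 -> Good f -> (exists x, f x < pi / 2) ->
  exists x, Hom t f x < pi / 2.
Proof.
move=> ht G [x0 hx0].
case: (pselect (exists x, Hom t f x < pi / 2)) => // Hn.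
have Hge : forall x, pi / 2 <= Hom t f x.
  by move=> x; rewrite leNgt; apply/negP => h; apply: Hn; exists x.
have GH := Good_Hom _ _ ht G.
have zero : forall y, Hom t f y = pi / 2.
  by move=> y; have := GH.2 y; have := Hge y; have := Hge (sneg y); lra.
pose h y := f y - pi / 2.
have Hexp : forall y, Hom t f y - pi / 2 = coefA t * h y + coefB t * (h (Phi y) / 8)
    + coefC t * (dS (@pp R m) y - pi / 2).
  by move=> y; rewrite /Hom /Tf /kur /coefB /h; ring.
have E : forall y, coefA t * h y + coefB t * (h (Phi y) / 8) + coefC t * (dS (@pp R m) y - pi / 2) = 0.
  by move=> y; rewrite -Hexp zero subrr.
have hx0' : h x0 < 0 by rewrite /h; lra.
have pi0 := pi_gt0 R.
case/andP: ht => t0 t1.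
move: E; rewrite /coefB /coefA /coefC; case: (lerP t (1/2)) => th E.
  have [tz|tp] := eqVneq t 0.
    by have := E x0; rewrite tz; lra.
  have tpos : 0 < t by rewrite lt_def tp t0.
  set k := 4 * (1 - 2 * t) / t.
  have k0 : 0 <= k by rewrite /k divr_ge0 //; lra.
  have Eh : forall y, h (Phi y) = - k * h y.
    move=> y; have := E y; rewrite mul0r addr0 subr0 => e.
    have e2 : h (Phi y) * t = - 4 * (1 - 2 * t) * h y by nra.
    by apply: (mulIf tp); rewrite e2 /k; field.
  have L : forall y z, h y - h z <= dS y z.
    by move=> y z; rewrite /h; have := G.1 y z; lra.
  have B : forall y, `|h y| <= pi.
    by move=> y; rewrite /h ler_norml; have /andP[] := good_bound G y; lra.
  have := eigen0 h k pi k0 L B Eh x0; lra.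
have e1 := E (@pp R m); have e2 := E (@qq R m); rewrite Phi_pq dS_refl in e1 e2.
have h0 : (2 * t - 1) * dS (@pp R m) (@qq R m) = 0.
  have -> : (2 * t - 1) * dS (@pp R m) (@qq R m) =
    (0 * h (@qq R m) + (1 - 0 - (2 * t - 1)) * (h (Phi (@pp R m)) / 8) + (2 * t - 1) * (dS (@pp R m) (@qq R m) - pi / 2))
    - (0 * h (@pp R m) + (1 - 0 - (2 * t - 1)) * (h (Phi (@pp R m)) / 8) + (2 * t - 1) * (0 - pi / 2)) by ring.
  by rewrite e1 e2 subrr.
move/eqP: h0; rewrite mulf_eq0 (negbTE dS_pq) orbF => /eqP; lra.
Qed.

End Hom2.

Section Hom3.
Context {R : realType} {m : nat}.
Local Notation S := (sphere R m.+1).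
Implicit Types y z : S.
Implicit Types f g : S -> R.

Lemma Hom_cont t f : 0 <= t <= 1 -> Good f -> forall e : R, 0 < e ->
  exists2 del : R, 0 < del & forall s g, 0 <= s <= 1 -> Good g ->
    `|s - t| < del -> supdist f g < del -> supdist (Hom t f) (Hom s g) < e.
Proof.
move=> ht G e e0.
have pi0 := pi_gt0 R.
pose c : R := 4 * pi + 1.
have c0 : 0 < c by rewrite /c; lra.
have del0 : 0 < e / (c + 1) by rewrite divr_gt0 //; lra.
exists (e / (c + 1)) => // s g hs Gg hst hfg.
set del := e / (c + 1) in del0 hst hfg *.
have cde : c * del < e.
  rewrite /del mulrA ltr_pdivrMr; last by lra.
  rewrite mulrDr mulr1; lra.
apply: le_lt_trans cde; apply: supdist_le => y.
have sd : forall z, `|f z - g z| <= supdist f g.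
  by move=> z; apply: supdist_ge; apply: good_bounded.
have [a0 b0 c0'] := coef_ge0 s hs.
have [la lc] := coef_lip t s.
have /andP[Bf1 Bf2] := good_bound G y.
have /andP[BT1 BT2] := good_bound (Good_T _ G) y.
have /andP[BK1 BK2] := good_bound (Good_kur (@pp R m)) y.
have ts : `|t - s| = `|s - t| by rewrite distrC.
have D1 : Hom t f y - Hom s f y = (coefA t - coefA s) * (f y - Tf f y)
   + (coefC t - coefC s) * (kur (@pp R m) y - Tf f y) by rewrite /Hom /coefB; ring.
have D2 : Hom s f y - Hom s g y = coefA s * (f y - g y)
   + coefB s * ((f (Phi y) - g (Phi y)) / 8) by rewrite /Hom /Tf; ring.
have E : Hom t f y - Hom s g y = (Hom t f y - Hom s f y) + (Hom s f y - Hom s g y) by ring.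
rewrite E D1 D2.
have n1 : `|(coefA t - coefA s) * (f y - Tf f y)| <= 2 * `|t - s| * pi.
  rewrite normrM; apply: ler_pM => //.
  by rewrite ler_norml; apply/andP; split; lra.
have n2 : `|(coefC t - coefC s) * (kur (@pp R m) y - Tf f y)| <= 2 * `|t - s| * pi.
  rewrite normrM; apply: ler_pM => //.
  by rewrite ler_norml; apply/andP; split; lra.
have n3 : `|coefA s * (f y - g y)| <= coefA s * supdist f g.
  by rewrite normrM ger0_norm //; apply: ler_wpM2l.
have n4 : `|coefB s * ((f (Phi y) - g (Phi y)) / 8)| <= coefB s * supdist f g.
  rewrite normrM ger0_norm //; apply: ler_wpM2l => //.
  rewrite normrM (@ger0_norm _ (8^-1)) ?invr_ge0 // ler_pdivrMr //.
  apply: le_trans (sd (Phi y)) _; rewrite ler_peMr ?ler1n //.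
  by apply: le_trans (sd y); exact: normr_ge0.
have sum1 : coefA s + coefB s <= 1 by rewrite /coefB; lra.
have sd0 : 0 <= supdist f g by apply: le_trans (sd y); exact: normr_ge0.
have n5 : coefA s * supdist f g + coefB s * supdist f g <= supdist f g.
  by rewrite -mulrDl ler_piMl.
have tri : forall u v w x : R, `|u + v + (w + x)| <= `|u| + `|v| + `|w| + `|x|.
  move=> u v w x; apply: le_trans (ler_normD _ _) _.
  have := ler_normD u v; have := ler_normD w x; lra.
apply: le_trans (tri _ _ _ _) _.
have h5 : `|t - s| * pi <= del * pi by apply: ler_wpM2r; [exact: ltW|rewrite ts; exact: ltW].
rewrite /c; lra.
Qed.

End Hom3.

Theorem proposition3p24 (R : realType) (n : nat) :
  (0 < n)%N -> contractible (fun f g : sphere R n -> R => supdist f g) (thickening R n).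
Proof.
case: n => [//|m] _.
exists (kur (@pp R m)).
  by apply/thick_iff; split; [exact: Good_kur|exists (@pp R m); rewrite /kur dS_refl divr_gt0 // pi_gt0].
exists (@Hom R m); split.
- move=> t a ht /thick_iff [G nz]; apply/thick_iff; split.
    exact: Good_Hom.
  exact: Hom_nz.
- move=> a _; apply/funext => y.
  have h : (0:R) <= 1/2 by lra.
  by rewrite /Hom /coefB /coefA /coefC h; ring.
- move=> a _; apply/funext => y.
  rewrite /Hom /coefB /coefA /coefC.
  have -> : ((1:R) <= 1/2) = false by apply/negbTE; rewrite -ltNge; lra.
  ring.
- move=> t a ht /thick_iff [G _] e e0.
  have [del del0 Hd] := Hom_cont _ _ ht G e e0.
  exists del => // s b hs /thick_iff [Gb _] hst hab.
  exact: Hd.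
Qed.
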